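(* Let $\Psi$ be a $C^1$ two-time electron–photon wave function on the set $\mathscr{S}$ of space-like configurations satisfying the free multi-time equations $$-i\hbar D_{\mathrm{ph}}\Psi = 0,\qquad -i\hbar D_{\mathrm{el}}\Psi + m_{\mathrm{el}}\Psi = 0\quad\text{in }\mathscr{S},$$ and let $X$ be any constant vector field on $\mathbb{R}^{1,1}$. Then the tensor current $j_X^{\mu\nu}$ is jointly conserved in $\mathscr{S}$: $$\partial_{x_{\mathrm{ph}}^\mu} j_X^{\mu\nu} = 0 \ \ (\nu=0,1),\qquad \partial_{x_{\mathrm{el}}^\nu} j_X^{\mu\nu}=0\ \ (\mu=0,1).$$
   Context: Minkowski space $\mathbb{R}^{1,1}$ has metric $\eta=\mathrm{diag}(1,-1)$; indices are raised/lowered with $\eta$ and repeated indices summed. Let $\gamma^0=\begin{pmatrix}0&1\\1&0\end{pmatrix}$, $\gamma^1=\begin{pmatrix}0&-1\\1&0\end{pmatrix}$, so $\gamma^\mu\gamma^\nu+\gamma^\nu\gamma^\mu=2\eta^{\mu\nu}\mathbb{1}$, and for a vector $X$ put $\gamma(X)=\gamma_\mu X^\mu$. The configuration spacetime is $\mathcal{M}=\mathbb{R}^{1,1}_{\mathrm{ph}}\times\mathbb{R}^{1,1}_{\mathrm{el}}$ with points $(\mathbf{x}_{\mathrm{ph}},\mathbf{x}_{\mathrm{el}})$, and $\mathscr{S}=\{(\mathbf{x}_{\mathrm{ph}},\mathbf{x}_{\mathrm{el}}):\eta(\mathbf{x}_{\mathrm{ph}}-\mathbf{x}_{\mathrm{el}},\mathbf{x}_{\mathrm{ph}}-\mathbf{x}_{\mathrm{el}})<0\}$.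 Let $E_-=\begin{pmatrix}0&1\\0&0\end{pmatrix}$, $E_+=\begin{pmatrix}0&0\\1&0\end{pmatrix}$, $e_-=(1,0)^T$, $e_+=(0,1)^T$. A two-time wave function is $\Psi=\sum_{a,b\in\{-,+\}}\psi_{ab}(\mathbf{x}_{\mathrm{ph}},\mathbf{x}_{\mathrm{el}})\,E_a\otimes e_b$ with complex-valued components $\psi_{ab}$ (first factor: photon, an anti-diagonal $2\times2$ matrix; second factor: electron, a vector in $\mathbb{C}^2$). Set $\gamma^\mu_{\mathrm{ph}}=\gamma^\mu\otimes\mathbb{1}$ (acting on the photon matrix factor by left multiplication), $\gamma^\nu_{\mathrm{el}}=\mathbb{1}\otimes\gamma^\nu$, $D_{\mathrm{ph}}=\gamma^\mu_{\mathrm{ph}}\partial_{x^\mu_{\mathrm{ph}}}$, $D_{\mathrm{el}}=\gamma^\nu_{\mathrm{el}}\partial_{x^\nu_{\mathrm{el}}}$. The Dirac adjoint is $\overline{\Psi}=\sum_{a,b}\overline{\psi_{ab}}\,(\gamma^0E_a^\dagger\gamma^0)\otimes(e_b^\dagger\gamma^0)$. Products are taken factorwise ($(A\otimes r)(B\otimes c)=AB\otimes rc$, with $rc$ a scalar, and right multiplication by $\gamma_{\mathrm{ph}}(X)=\gamma(X)\otimes\mathbb{1}$ acting on the photon matrix factor), $\mathrm{tr}_{\mathrm{ph}}$ is the trace over the photon matrix factor, and $$j_X^{\mu\nu}=\tfrac14\,\mathrm{tr}_{\mathrm{ph}}\{\overline{\Psi}\,\gamma^\mu_{\mathrm{ph}}\gamma^\nu_{\mathrm{el}}\,\Psi\,\gamma_{\mathrm{ph}}(X)\}.$$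 *)

(* Defs.v *)
From Stdlib Require Import Reals.
From Coquelicot Require Import Coquelicot.

Local Open Scope C_scope.

(* Spinor/matrix indices 0,1 are encoded as false,true. *)
Definition Mat := bool -> bool -> C.
Definition Vec := bool -> C.

Definition mmul (A B : Mat) : Mat :=
  fun i j => A i false * B false j + A i true * B true j.
Definition madj (A : Mat) : Mat := fun i j => Cconj (A j i).
Definition mtr (A : Mat) : C := A false false + A true true.
Definition mscal (c : C) (A : Mat) : Mat := fun i j => c * A i j.
Definition madd (A B : Mat) : Mat := fun i j => A i j + B i j.

Definition gamma0 : Mat := fun i j => if Bool.eqb i j then 0 else 1.
Definition gamma1 : Mat :=
  fun i j => match i, j with false, true => RtoC (-1) | true, false => 1 | _, _ => 0 end.
Definition gamma (mu : bool) : Mat := if mu then gamma1 else gamma0.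

(* Minkowski metric diag(1,-1); gamma(X) = gamma_mu X^mu = gamma^0 X^0 - gamma^1 X^1 *)
Definition eta (mu : bool) : R := if mu then (-1)%R else 1%R.
Definition gammaX (X : bool -> R) : Mat :=
  madd (mscal (RtoC (eta false * X false)) (gamma false))
       (mscal (RtoC (eta true * X true)) (gamma true)).

Inductive pm := Minus | Plus.

Definition Emat (a : pm) : Mat := fun i j =>
  match a, i, j with
  | Minus, false, true => 1
  | Plus, true, false => 1
  | _, _, _ => 0 end.
Definition evec (b : pm) : Vec := fun k =>
  match b, k with Minus, false => 1 | Plus, true => 1 | _, _ => 0 end.

Definition sum_pm (f : pm -> C) : C := f Minus + f Plus.

(* Elements of (2x2 matrices) (x) C^2 : T i j k, (i,j) photon matrix entry,
   k electron component.  Elements of (2x2 matrices) (x) (row vectors)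
   are represented the same way (k = row entry). *)
Definition Tens := bool -> bool -> bool -> C.

Definition tens_of (c : pm -> pm -> C) : Tens := fun i j k =>
  sum_pm (fun a => sum_pm (fun b => c a b * Emat a i j * evec b k)).

(* Dirac adjoint: sum_{a,b} conj(c_ab) (gamma0 E_a^dag gamma0) (x) (e_b^dag gamma0) *)
Definition rowadj (v : Vec) : Vec := fun k =>
  Cconj (v false) * gamma0 false k + Cconj (v true) * gamma0 true k.
Definition bar_of (c : pm -> pm -> C) : Tens := fun i j k =>
  sum_pm (fun a => sum_pm (fun b =>
    Cconj (c a b) * mmul gamma0 (mmul (madj (Emat a)) gamma0) i j
      * rowadj (evec b) k)).

Definition act_ph (A : Mat) (T : Tens) : Tens := fun i j k =>
  A i false * T false j k + A i true * T true j k.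
Definition act_el (A : Mat) (T : Tens) : Tens := fun i j k =>
  A k false * T i j false + A k true * T i j true.
Definition ract_ph (T : Tens) (A : Mat) : Tens := fun i j k =>
  T i false k * A false j + T i true k * A true j.
(* factorwise product (A (x) r)(B (x) c) = AB (x) rc, extended bilinearly *)
Definition bar_mul (Bt T : Tens) : Mat := fun i j =>
  Bt i false false * T false j false + Bt i false true * T false j true
  + (Bt i true false * T true j false + Bt i true true * T true j true).

Definition tadd (S T : Tens) : Tens := fun i j k => S i j k + T i j k.
Definition tscal (c : C) (T : Tens) : Tens := fun i j k => c * T i j k.

(* configuration points ((x_ph^0, x_ph^1), (x_el^0, x_el^1)) *)
Definition Pt := ((R * R) * (R * R))%type.
Inductive particle := Ph | El.

Definition minkq (x : R * R) : R := (fst x * fst x - snd x * snd x)%R.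
Definition spacelike (p : Pt) : Prop :=
  (minkq (fst (fst p) - fst (snd p), snd (fst p) - snd (snd p)) < 0)%R.

Definition coord (p : Pt) (k : particle) (mu : bool) : R :=
  let x := match k with Ph => fst p | El => snd p end in
  if mu then snd x else fst x.
Definition upd (p : Pt) (k : particle) (mu : bool) (s : R) : Pt :=
  let set x := if mu then (fst x, s) else (s, snd x) in
  match k with Ph => (set (fst p), snd p) | El => (fst p, set (snd p)) end.

Definition has_partial (f : Pt -> C) (p : Pt) (k : particle) (mu : bool) (l : C)
  : Prop := is_derive (fun s => f (upd p k mu s)) (coord p k mu) l.

Definition C1_on (S : Pt -> Prop) (f : Pt -> C) : Prop :=
  exists D : particle -> bool -> Pt -> C,
    forall p, S p ->
      continuous f p /\
      forall k mu, has_partial f p k mu (D k mu p) /\ continuous (D k mu) p.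

(* Free multi-time equations at p, given the components psi and the
   values dpsi k mu a b of their partial derivatives d/dx^mu_k psi_ab at p. *)
Definition D_op (k : particle) (dpsi : particle -> bool -> pm -> pm -> C) : Tens :=
  let act := match k with Ph => act_ph | El => act_el end in
  tadd (act (gamma false) (tens_of (dpsi k false)))
       (act (gamma true) (tens_of (dpsi k true))).

Definition free_eqs (hbar m : R) (psi : pm -> pm -> C)
  (dpsi : particle -> bool -> pm -> pm -> C) : Prop :=
  (forall i j l, tscal (- Ci * RtoC hbar) (D_op Ph dpsi) i j l = 0) /\
  (forall i j l, tadd (tscal (- Ci * RtoC hbar) (D_op El dpsi))
                      (tscal (RtoC m) (tens_of psi)) i j l = 0).

(* j_X^{mu nu} = 1/4 tr_ph { Psibar gamma^mu_ph gamma^nu_el Psi gamma_ph(X) } *)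
Definition current (psi : pm -> pm -> Pt -> C) (X : bool -> R) (mu nu : bool)
  (p : Pt) : C :=
  let c := fun a b => psi a b p in
  RtoC (/ 4) * mtr (bar_mul (bar_of c)
      (act_ph (gamma mu) (act_el (gamma nu) (ract_ph (tens_of c) (gammaX X))))).

(* Main.v *)
Require Import Defs.
From Stdlib Require Import Reals Lra Psatz FunctionalExtensionality.
From Coquelicot Require Import Coquelicot.

Lemma dC_fst (f : R -> C) x l : is_derive f x l -> is_derive (fun s => fst (f s)) x (fst l).
Proof.
  intros H. unfold is_derive in *.
  eapply filterdiff_ext_lin.
  - apply (filterdiff_comp' f (fun t : C_R_NormedModule => fst t) x _ (fun t : C_R_NormedModule => fst t) H).
    apply filterdiff_linear. apply (is_linear_fst (K:=R_AbsRing) (U:=R_NormedModule) (V:=R_NormedModule)).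
  - intros y. reflexivity.
Qed.

Lemma dC_snd (f : R -> C) x l : is_derive f x l -> is_derive (fun s => snd (f s)) x (snd l).
Proof.
  intros H. unfold is_derive in *.
  eapply filterdiff_ext_lin.
  - apply (filterdiff_comp' f (fun t : C_R_NormedModule => snd t) x _ (fun t : C_R_NormedModule => snd t) H).
    apply filterdiff_linear. apply (is_linear_snd (K:=R_AbsRing) (U:=R_NormedModule) (V:=R_NormedModule)).
  - intros y. reflexivity.
Qed.

Lemma lin_pair : is_linear (U := prod_NormedModule R_AbsRing R_NormedModule R_NormedModule) (V := C_R_NormedModule) (fun t => (fst t, snd t) : C).
Proof.
  split.
  - intros [a b] [c d]; reflexivity.
  - intros k [a b]; reflexivity.
  - exists 1; split; [lra|]. intros [a b]. rewrite Rmult_1_l. apply Rle_refl.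
Qed.

Lemma dC_pair (f g : R -> R) x a b : is_derive f x a -> is_derive g x b ->
  is_derive (fun s => (f s, g s) : C) x (a, b).
Proof.
  intros Hf Hg. unfold is_derive in *.
  eapply filterdiff_ext_lin.
  - apply (filterdiff_comp'_2 (K:=R_AbsRing) (W:=C_R_NormedModule) f g (fun u v => (u, v) : C) x _ _ (fun u v => (u,v) : C) Hf Hg).
    apply filterdiff_linear. apply lin_pair.
  - intros y. reflexivity.
Qed.

Lemma dC_eta (f : R -> C) x l : is_derive (fun s => fst (f s)) x (fst l) ->
  is_derive (fun s => snd (f s)) x (snd l) -> is_derive f x l.
Proof.
  intros H1 H2. destruct l as [a b].
  pose proof (dC_pair _ _ _ _ _ H1 H2) as H.
  unfold is_derive in *. eapply filterdiff_ext; [|exact H].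
  intros y; simpl. destruct (f y); reflexivity.
Qed.

Lemma dCplus (f g : R -> C) x a b : is_derive f x a -> is_derive g x b ->
  is_derive (fun s => Cplus (f s) (g s)) x (Cplus a b).
Proof.
  intros Hf Hg. apply dC_eta; simpl.
  - apply (Derive.is_derive_plus (fun s => fst (f s)) (fun s => fst (g s))); [apply dC_fst|apply dC_fst]; auto.
  - apply (Derive.is_derive_plus (fun s => snd (f s)) (fun s => snd (g s))); [apply dC_snd|apply dC_snd]; auto.
Qed.

Lemma deq {V : NormedModule R_AbsRing} (f : R -> V) x l l' : is_derive f x l -> l = l' -> is_derive f x l'.
Proof. intros H <-; exact H. Qed.
Lemma deqR (f : R -> R) x (l l' : R) : is_derive f x l -> l = l' -> is_derive f x l'.
Proof. intros H <-; exact H. Qed.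

Lemma dCmult (f g : R -> C) x a b : is_derive f x a -> is_derive g x b ->
  is_derive (fun s => Cmult (f s) (g s)) x (Cplus (Cmult a (g x)) (Cmult (f x) b)).
Proof.
  intros Hf Hg.
  pose proof (dC_fst _ _ _ Hf) as F1. pose proof (dC_snd _ _ _ Hf) as F2.
  pose proof (dC_fst _ _ _ Hg) as G1. pose proof (dC_snd _ _ _ Hg) as G2.
  apply dC_eta.
  - eapply deqR.
    + apply (Derive.is_derive_minus (fun t => fst (f t) * fst (g t)) (fun t => snd (f t) * snd (g t)));
      apply (Derive.is_derive_mult (fun t => _ (f t)) (fun t => _ (g t))); eauto.
    + unfold minus, plus, opp; simpl; ring.
  - eapply deqR.
    + apply (Derive.is_derive_plus (fun t => fst (f t) * snd (g t)) (fun t => snd (f t) * fst (g t)));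
      apply (Derive.is_derive_mult (fun t => _ (f t)) (fun t => _ (g t))); eauto.
    + unfold minus, plus, opp; simpl; ring.
Qed.

Lemma dCconj (f : R -> C) x a : is_derive f x a ->
  is_derive (fun s => Cconj (f s)) x (Cconj a).
Proof.
  intros Hf. apply dC_eta; simpl.
  - apply dC_fst; auto.
  - apply (Derive.is_derive_opp (fun t => snd (f t))). apply dC_snd; auto.
Qed.

Lemma dCconst (c : C) x : is_derive (fun _ : R => c) x (RtoC 0).
Proof. apply dC_eta; simpl; apply (is_derive_const (K:=R_AbsRing) (V:=R_NormedModule)). Qed.

Local Open Scope C_scope.

Definition Bform (X : bool -> R) (mu nu : bool) (u v : pm -> pm -> C) : C :=
  RtoC (/ 4) * mtr (bar_mul (bar_of u)
      (act_ph (gamma mu) (act_el (gamma nu) (ract_ph (tens_of v) (gammaX X))))).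

Definition sgn (mu : bool) (a : pm) : R :=
  if mu then match a with Minus => 1%R | Plus => (-1)%R end else 1%R.
Definition xf (X : bool -> R) (a : pm) : R :=
  match a with Minus => (X false - X true)%R | Plus => (X false + X true)%R end.
Definition Fform X mu nu (u v : pm -> pm -> C) : C :=
  RtoC (/ 4) * sum_pm (fun a => sum_pm (fun b =>
    RtoC (sgn mu a * sgn nu b * xf X a) * (Cconj (u a b) * v a b))).

Lemma Cconj_RtoC r : Cconj (RtoC r) = RtoC r.
Proof. unfold Cconj, RtoC; simpl. f_equal. ring. Qed.

Lemma RtoC_m1 : RtoC (-1) = (- RtoC 1)%C.
Proof. unfold RtoC, Copp; simpl. f_equal; ring. Qed.

Lemma Bform_F X mu nu u v : Bform X mu nu u v = Fform X mu nu u v.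
Proof.
  destruct mu, nu;
  cbv [Fform sgn xf Bform mtr bar_mul bar_of act_ph act_el ract_ph tens_of gammaX gamma gamma0 gamma1 eta Emat evec sum_pm mmul madj rowadj Bool.eqb madd mscal];
  rewrite ?Cconj_RtoC, ?RtoC_m1, ?RtoC_mult, ?RtoC_plus, ?RtoC_minus, ?RtoC_m1; ring.
Qed.

Ltac dC Hd := lazymatch goal with
| |- is_derive (fun s => Cplus (@?A s) (@?B s)) _ _ => apply (dCplus A B); [dC Hd | dC Hd]
| |- is_derive (fun s => Cmult (@?A s) (@?B s)) _ _ => apply (dCmult A B); [dC Hd | dC Hd]
| |- is_derive (fun s => Cconj (@?A s)) _ _ => apply (dCconj A); dC Hd
| |- is_derive (fun s => _ _ _ (upd _ _ _ s)) _ _ => apply Hd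
| |- _ => apply dCconst
end.
Lemma current_deriv psi X mu nu p k m (d : pm -> pm -> C) :
  (forall a b, has_partial (psi a b) p k m (d a b)) ->
  has_partial (current psi X mu nu) p k m
    (Fform X mu nu d (fun a b => psi a b p) + Fform X mu nu (fun a b => psi a b p) d).
Proof.
  unfold has_partial. intros Hd.
  assert (Hup : upd p k m (coord p k m) = p)
    by (destruct p as [[? ?] [? ?]]; destruct k, m; reflexivity).
  apply (is_derive_ext (fun s => Fform X mu nu (fun a b => psi a b (upd p k m s)) (fun a b => psi a b (upd p k m s)))).
  { intros t. symmetry. unfold current. apply Bform_F. }
  eapply deq.
  - cbv [Fform sum_pm]. dC Hd.
  - cbv beta. rewrite Hup. cbv [Fform sum_pm]. match goal with |- ?u = ?v => change (@eq C u v) end. ring.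
Qed.

Ltac dst f := destruct (f Minus Minus); destruct (f Minus Plus); destruct (f Plus Minus); destruct (f Plus Plus).

Ltac alg := cbv [Fform sgn xf Bform mtr bar_mul bar_of act_ph act_el ract_ph tens_of gammaX gamma gamma0 gamma1 eta Emat evec sum_pm mmul madj rowadj Bool.eqb];
  unfold Cplus, Cmult, Cconj, Copp, RtoC, Ci, Cminus; apply injective_projections; simpl; ring.

Lemma key_ph X nu (c d1 : pm -> pm -> C) :
  let d0 := fun a b => match a with Plus => d1 Plus b | Minus => - d1 Minus b end in
  Fform X false nu d0 c + Fform X false nu c d0 + (Fform X true nu d1 c + Fform X true nu c d1) = 0.
Proof. intros d0. subst d0. cbv beta. alg. Qed.

Lemma key_el X mu k (c d1 : pm -> pm -> C) :
  let d0 := fun a b => match b with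
     | Plus => d1 a Plus - Ci * RtoC k * c a Minus
     | Minus => - d1 a Minus - Ci * RtoC k * c a Plus end in
  Fform X mu false d0 c + Fform X mu false c d0 + (Fform X mu true d1 c + Fform X mu true c d1) = 0.
Proof. intros d0. subst d0. cbv beta. alg. Qed.

Ltac unf := cbv [free_eqs D_op tscal tadd mtr bar_mul bar_of act_ph act_el ract_ph tens_of gammaX gamma gamma0 gamma1 eta Emat evec sum_pm mmul madj rowadj Bool.eqb];
  unfold Cplus, Cmult, Cconj, Copp, RtoC, Ci, Cminus.

Lemma ph_rel hbar m c dpsi : (0 < hbar)%R -> free_eqs hbar m c dpsi -> forall a b,
  dpsi Ph false a b = match a with Plus => dpsi Ph true Plus b | Minus => - dpsi Ph true Minus b end.
Proof.
  intros Hh [H _] a b.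
  destruct a, b;
  [ specialize (H true true false) | specialize (H true true true)
  | specialize (H false false false) | specialize (H false false true) ];
  revert H; unf; simpl; intros H; injection H; clear H; intros H1 H2;
  apply injective_projections; simpl; nra.
Qed.

Lemma el_rel hbar m c dpsi : (0 < hbar)%R -> free_eqs hbar m c dpsi -> forall a b,
  dpsi El false a b = match b with
     | Plus => dpsi El true a Plus - Ci * RtoC (m / hbar) * c a Minus
     | Minus => - dpsi El true a Minus - Ci * RtoC (m / hbar) * c a Plus end.
Proof.
  intros Hh [_ H] a b.
  assert (Hm : m = ((m / hbar) * hbar)%R) by (field; lra).
  set (k := (m / hbar)%R) in *. clearbody k. subst m.
  destruct a, b;
  [ specialize (H false true true) | specialize (H false true false)
  | specialize (H true false true) | specialize (H true false false) ];
  revert H; unf; simpl; intros H; injection H; clear H; intros H1 H2;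
  apply injective_projections; simpl; nra.
Qed.

Theorem proposition1
  (hbar m_el : R) (hhbar : (0 < hbar)%R) (hm : (0 < m_el)%R)
  (psi : pm -> pm -> Pt -> C)
  (hC1 : forall a b, C1_on spacelike (psi a b))
  (heq : forall p, spacelike p ->
     forall dpsi : particle -> bool -> pm -> pm -> C,
       (forall k mu a b, has_partial (psi a b) p k mu (dpsi k mu a b)) ->
       free_eqs hbar m_el (fun a b => psi a b p) dpsi)
  (X : bool -> R) :
  forall p, spacelike p ->
    (forall nu, exists l0 l1 : C,
        has_partial (fun q => current psi X false nu q) p Ph false l0 /\
        has_partial (fun q => current psi X true nu q) p Ph true l1 /\
        (l0 + l1)%C = 0%C) /\
    (forall mu, exists l0 l1 : C,
        has_partial (fun q => current psi X mu false q) p El false l0 /\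
        has_partial (fun q => current psi X mu true q) p El true l1 /\
        (l0 + l1)%C = 0%C).
Proof.
  intros p Hsp.
  destruct (hC1 Minus Minus) as [D1 HD1].
  destruct (hC1 Minus Plus) as [D2 HD2].
  destruct (hC1 Plus Minus) as [D3 HD3].
  destruct (hC1 Plus Plus) as [D4 HD4].
  set (dps := fun k mu a b => match a, b with
    | Minus, Minus => D1 k mu p | Minus, Plus => D2 k mu p
    | Plus, Minus => D3 k mu p | Plus, Plus => D4 k mu p end).
  assert (Hd : forall k mu a b, has_partial (psi a b) p k mu (dps k mu a b)).
  { intros k mu a b; destruct a, b; simpl;
    [ apply (proj2 (HD1 p Hsp) k mu) | apply (proj2 (HD2 p Hsp) k mu)
    | apply (proj2 (HD3 p Hsp) k mu) | apply (proj2 (HD4 p Hsp) k mu) ]. }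
  clearbody dps.
  pose proof (heq p Hsp dps Hd) as Hfree.
  set (c := fun a b => psi a b p).
  split.
  - intros nu.
    exists (Fform X false nu (dps Ph false) c + Fform X false nu c (dps Ph false)),
           (Fform X true nu (dps Ph true) c + Fform X true nu c (dps Ph true)).
    split; [|split].
    + apply current_deriv. intros; apply Hd.
    + apply current_deriv. intros; apply Hd.
    + assert (E : dps Ph false = fun a b => match a with Plus => dps Ph true Plus b | Minus => - dps Ph true Minus b end).
      { apply functional_extensionality; intro a; apply functional_extensionality; intro b.
        apply (ph_rel hbar m_el c dps hhbar Hfree). }
      rewrite E. exact (key_ph X nu c (dps Ph true)).
  - intros mu.
    exists (Fform X mu false (dps El false) c + Fform X mu false c (dps El false)),
           (Fform X mu true (dps El true) c + Fform X mu true c (dps El true)).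
    split; [|split].
    + apply current_deriv. intros; apply Hd.
    + apply current_deriv. intros; apply Hd.
    + assert (E : dps El false = fun a b => match b with
          | Plus => dps El true a Plus - Ci * RtoC (m_el / hbar) * c a Minus
          | Minus => - dps El true a Minus - Ci * RtoC (m_el / hbar) * c a Plus end).
      { apply functional_extensionality; intro a; apply functional_extensionality; intro b.
        apply (el_rel hbar m_el c dps hhbar Hfree). }
      rewrite E. exact (key_el X mu (m_el / hbar) c (dps El true)).
Qed.
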